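(* Let $s \geq 3$, $b \geq 1$ and $a \geq 128$ be integers and let $q$ be a prime power with $q \geq a\log q$. Let $\mathcal{H}$ be a partial linear space with point set $P$ and line set $L$ satisfying properties (i)–(v) below. Then for every $X \subseteq L$, $$\sum_{p \in P_X} |X_p| > \tfrac{1}{2}(a\log q)\,|X| - 2abq^2\log q.$$ Properties: (i) $|L| = q^2(q^2-q+1)$; (ii) $a(q^2\log q)/2 \leq |P| \leq 2aq^2\log q$; (iii) each line has at least $(a\log q)/2$ points; (iv) for any pair of lines, the number of $(s+1)$-fans containing that pair is at most $(2a\log q)^s$; (v) every set of $s+1$ pairwise intersecting lines either passes through a common point or is an $(s+1)$-fan.
   Context: A partial linear space consists of a set of points and a set of lines (sets of points) such that any two distinct lines share at most one point. For $t \geq 3$, a $t$-fan is a set of $t$ pairwise intersecting lines such that $t-1$ of them pass through a common point and the remaining one does not pass through that point. For $X \subseteq L$ and $p \in P$, $X_p$ denotes the set of lines in $X$ containing $p$, and $P_X = \{p \in P : |X_p| \geq b\}$. $\log$ is the natural logarithm. (Such $\mathcal{H}$ exists for these parameters.) *)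

(* Defs.v *)
From Stdlib Require Import Reals.
From mathcomp Require Import all_boot.

Set Implicit Arguments.
Unset Strict Implicit.
Unset Printing Implicit Defensive.

(* Points are the elements of a finite type T (point set P = [set: T]);
   lines are subsets of points, the line set is L : {set {set T}}. *)

Definition partial_linear_space (T : finType) (L : {set {set T}}) : Prop :=
  forall l1 l2, l1 \in L -> l2 \in L -> l1 != l2 -> #|l1 :&: l2| <= 1.

Definition pairwise_intersecting (T : finType) (F : {set {set T}}) : bool :=
  [forall l1 in F, forall l2 in F, (l1 != l2) ==> (l1 :&: l2 != set0)].

Definition concurrent (T : finType) (F : {set {set T}}) : bool :=
  [exists x, forall l in F, x \in l].

Definition is_fan (T : finType) (t : nat) (F : {set {set T}}) : bool :=
  [&& 3 <= t, #|F| == t, pairwise_intersecting F &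
      [exists x, exists m in F,
         (x \notin m) && [forall l in F, (l != m) ==> (x \in l)]]].

Definition lines_through (T : finType) (X : {set {set T}}) (p : T) : {set {set T}} :=
  [set l in X | p \in l].

Definition rich_points (T : finType) (b : nat) (X : {set {set T}}) : {set T} :=
  [set p | b <= #|lines_through X p|].

Definition prime_power (q : nat) : Prop :=
  exists p k, [/\ prime p, 0 < k & q = p ^ k].

(* Main.v *)
Require Import Defs.
From Stdlib Require Import Reals Lra Lia Psatz.
From mathcomp Require Import all_boot.

Local Open Scope R_scope.

Lemma INR_addn (x y : nat) : INR (x + y)%N = INR x + INR y.
Proof. exact: plus_INR. Qed.

Lemma sum_lb (I : finType) (A : {set I}) (f : I -> nat) (c : R) :
  (forall i, i \in A -> c <= INR (f i)) ->
  INR #|A| * c <= INR (\sum_(i in A) f i).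
Proof.
move=> H; rewrite -sum1_card.
apply: (big_ind2 (fun x y => INR x * c <= INR y)).
- simpl; lra.
- move=> x1 x2 y1 y2 h1 h2; rewrite !INR_addn; lra.
- move=> i Hi; have := H i Hi; simpl; lra.
Qed.

Lemma cardlt (T : finType) (X : {set {set T}}) p :
  #|lines_through X p| = (\sum_(l in X) (p \in l : nat))%N.
Proof.
rewrite -sum1_card big_mkcond [RHS]big_mkcond /=.
by apply: eq_bigr => l _; rewrite inE; case: (l \in X); case: (p \in l).
Qed.

Lemma qge2 q : prime_power q -> (2 <= q)%N.
Proof.
case=> p [k [pp k0 ->]].
rewrite -(prednK k0) expnS.
apply: leq_trans (prime_gt1 pp) (leq_pmulr _ _).
by rewrite expn_gt0 prime_gt0.
Qed.

Theorem lemma4p2 (s b a q : nat) (T : finType) (L : {set {set T}}) :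
  (3 <= s)%N -> (1 <= b)%N -> (128 <= a)%N -> prime_power q ->
  INR a * ln (INR q) <= INR q ->
  partial_linear_space L ->
  (* (i) *)
  #|L| = (q ^ 2 * (q ^ 2 - q + 1))%N ->
  (* (ii) *)
  INR a * (INR q ^ 2 * ln (INR q)) / 2 <= INR #|T| ->
  INR #|T| <= 2 * INR a * INR q ^ 2 * ln (INR q) ->
  (* (iii) *)
  (forall l, l \in L -> INR a * ln (INR q) / 2 <= INR #|l|) ->
  (* (iv) *)
  (forall l1 l2, l1 \in L -> l2 \in L -> l1 <> l2 ->
     INR #|[set F : {set {set T}} | [&& F \subset L, l1 \in F, l2 \in F
                                       & is_fan s.+1 F] ]|
      <= (2 * INR a * ln (INR q)) ^ s) ->
  (* (v) *)
  (forall F : {set {set T}}, F \subset L -> #|F| = s.+1 ->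
     pairwise_intersecting F -> concurrent F \/ is_fan s.+1 F) ->
  forall X : {set {set T}}, X \subset L ->
    INR (\sum_(p in rich_points b X) #|lines_through X p|) >
     INR a * ln (INR q) / 2 * INR #|X| - 2 * INR a * INR b * INR q ^ 2 * ln (INR q).
Proof.
move=> _ b1 a128 pq _ _ _ _ HT Hl _ _ X XL.
set S := (\sum_(p in rich_points b X) #|lines_through X p|)%N.
set N := (\sum_(p in ~: rich_points b X) #|lines_through X p|)%N.
have Etot : (S + N)%N = (\sum_(l in X) #|l|)%N.
  have -> : (S + N = \sum_(p : T) #|lines_through X p|)%N.
    rewrite (bigID (fun p => p \in rich_points b X)) /=.
    by rewrite /S /N; congr addn; apply: eq_bigl => p; rewrite ?in_setC.
  under eq_bigr => p _ do rewrite cardlt.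
  rewrite exchange_big /=.
  apply: eq_bigr => l _.
  by rewrite -sum1_card [RHS]big_mkcond.
have HN : (N <= (b - 1) * #|T|)%N.
  apply: (@leq_trans (\sum_(p in ~: rich_points b X) (b-1))%N).
    apply: leq_sum => p; rewrite in_setC inE -ltnNge => h.
    by rewrite -(leq_add2r 1) addn1 subnK.
  rewrite sum_nat_const mulnC leq_mul2l max_card orbT //.
have Hsum : INR #|X| * (INR a * ln (INR q) / 2) <= INR (\sum_(l in X) #|l|)%N.
  by apply: sum_lb => l lX; apply: Hl; apply: (subsetP XL).
have ES : INR S + INR N = INR (\sum_(l in X) #|l|)%N by rewrite -Etot INR_addn.
have HNr : INR N <= INR (b - 1)%N * INR #|T|.
  by rewrite -mult_INR; apply: le_INR; apply/leP.
have Eb : INR b = INR (b - 1)%N + 1.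
  by rewrite -[in LHS](subnK b1) INR_addn.
have q2 : (1 < INR q).
  have := qge2 q pq => /leP h; apply: (lt_INR 1); lia.
have lq : 0 < ln (INR q).
  rewrite -ln_1; apply: ln_increasing; lra.
have ha : 0 < INR a.
  apply: (lt_INR 0); apply/ltP; exact: leq_trans a128.
set M := 2 * INR a * INR q ^ 2 * ln (INR q).
have HM : 0 < M.
  rewrite /M; apply: Rmult_lt_0_compat => //; apply: Rmult_lt_0_compat; try lra.
  apply: pow_lt; lra.
have HTM : INR (b - 1)%N * INR #|T| <= INR (b - 1)%N * M.
  by apply: Rmult_le_compat_l => //; apply: pos_INR.
have -> : 2 * INR a * INR b * INR q ^ 2 * ln (INR q) = INR b * M by rewrite /M; ring.
rewrite Eb.
have := pos_INR (b - 1)%N.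
move=> hb; clearbody S N M; clear -hb Hsum ES HNr HTM HM; move: (INR S) (INR N) (INR #|X|) (INR #|T|) (INR (b-1)%N) (INR (\sum_(l in X) #|l|)%N) hb Hsum ES HNr HTM HM => *; nra.
Qed.
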